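(* Let $G\le\mathrm{O}(d)$ be finite, $x,y\in\mathbb{R}^d$, and $T\subseteq[y]$. Consider the statements: (a) $T\supseteq S(x,y)$; (b) $\bigcup_{p\in T}\overline{V_p}\supseteq\overline{V_x}$; (c) for every $z\in\mathbb{R}^d$ there exists $v\in\arg\max_{p\in[z]}\langle p,x\rangle$ such that $T\cap\arg\max_{q\in[y]}\langle q,v\rangle\ne\varnothing$. Then (a)$\Leftrightarrow$(b)$\Rightarrow$(c), and if moreover $x\in P(G)$, then (c)$\Rightarrow$(b).
   Context: For $x\in\mathbb{R}^d$, $[x]:=\{gx:g\in G\}$. The open Voronoi cell $V_x$ is the set of $y\in\mathbb{R}^d$ such that $x$ is the unique maximizer of $\langle p,y\rangle$ over $p\in[x]$, and $\overline{V_x}$ is its closure. $S(x,y):=\{q\in[y]:V_q\cap V_x\ne\varnothing\}$. $P(G):=\{x\in\mathbb{R}^d:\mathrm{stab}_G(x)=\{\mathrm{id}\}\}$. *)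

(* Defs.v *)
From HB Require Import structures.
From mathcomp Require Import all_boot all_order all_algebra.
From mathcomp Require Import all_classical all_reals all_analysis.
Set Implicit Arguments. Unset Strict Implicit. Unset Printing Implicit Defensive.
Import Order.TTheory GRing.Theory Num.Theory.
Import numFieldNormedType.Exports.
Local Open Scope classical_set_scope.
Local Open Scope ring_scope.

Definition ip (R : realType) (d : nat) (p y : 'cV[R]_d) : R :=
  \sum_(i < d) p i 0 * y i 0.

Definition finite_orth_group (R : realType) (d : nat) (G : set 'M[R]_d) : Prop :=
  [/\ finite_set G, G 1%:M,
      (forall g h, G g -> G h -> G (g *m h)),
      (forall g, G g -> G (invmx g)) &
      (forall g, G g -> g *m g^T = 1%:M)].

Definition gorbit (R : realType) (d : nat) (G : set 'M[R]_d) (x : 'cV[R]_d)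
  : set 'cV[R]_d := (fun g => g *m x) @` G.

(* open Voronoi cell: x is the unique maximizer of <p,y> over p in [x] *)
Definition vor (R : realType) (d : nat) (G : set 'M[R]_d) (x : 'cV[R]_d)
  : set 'cV[R]_d :=
  [set y | forall p, gorbit G x p -> p != x -> ip p y < ip x y ].

Definition Sxy (R : realType) (d : nat) (G : set 'M[R]_d) (x y : 'cV[R]_d)
  : set 'cV[R]_d :=
  [set q | gorbit G y q /\ vor G q `&` vor G x !=set0].

Definition Pfree (R : realType) (d : nat) (G : set 'M[R]_d) : set 'cV[R]_d :=
  [set x | forall g, G g -> g *m x = x -> g = 1%:M].

Definition argmax_orbit (R : realType) (d : nat) (G : set 'M[R]_d) (z x : 'cV[R]_d)
  : set 'cV[R]_d :=
  [set p | gorbit G z p /\ forall p', gorbit G z p' -> ip p' x <= ip p x].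

(* Main.v *)
Require Import Defs.
From HB Require Import structures.
From mathcomp Require Import all_boot all_order all_algebra.
From mathcomp Require Import all_classical all_reals all_analysis.
From mathcomp Require Import lra.
Import Order.TTheory GRing.Theory Num.Theory.
Import numFieldNormedType.Exports.
Local Open Scope classical_set_scope.
Local Open Scope ring_scope.

Section IP.
Context {R : realType} {d : nat}.
Implicit Types (p u v a b : 'cV[R]_d) (g : 'M[R]_d).

Lemma ipC p v : ip p v = ip v p.
Proof. by apply: eq_bigr => i _; rewrite mulrC. Qed.

Lemma ipDr p u v : ip p (u + v) = ip p u + ip p v.
Proof. by rewrite /ip -big_split; apply: eq_bigr => i _; rewrite mxE mulrDr. Qed.

Lemma ipZr p t v : ip p (t *: v) = t * ip p v.
Proof. by rewrite /ip mulr_sumr; apply: eq_bigr => i _; rewrite mxE mulrCA. Qed.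

Lemma ipNr p v : ip p (- v) = - ip p v.
Proof. by rewrite -scaleN1r ipZr mulN1r. Qed.

Lemma ipDl p u v : ip (u + v) p = ip u p + ip v p.
Proof. by rewrite ipC ipDr !(ipC p). Qed.

Lemma ipNl p v : ip (- v) p = - ip v p.
Proof. by rewrite ipC ipNr ipC. Qed.

Lemma ip_mul g a b : ip (g *m a) b = ip a (g^T *m b).
Proof.
rewrite /ip.
rewrite (eq_bigr (fun i => \sum_(j < d) g i j * a j 0 * b i 0)); last first.
  by move=> i _; rewrite mxE big_distrl.
rewrite exchange_big /=; apply: eq_bigr => j _.
rewrite mxE big_distrr /=; apply: eq_bigr => i _.
by rewrite mxE -mulrA mulrCA.
Qed.

Lemma ip_ge0 v : 0 <= ip v v.
Proof. by apply: sumr_ge0 => i _; rewrite -expr2 sqr_ge0. Qed.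

Lemma ip_gt0 v : v != 0 -> 0 < ip v v.
Proof.
move=> vn0.
have [i vi] : exists i, v i 0 != 0.
  apply/existsP; apply: contraNT vn0; rewrite negb_exists => /forallP H.
  apply/eqP/matrixP => i j; rewrite ord1 mxE.
  by move: (H i); rewrite negbK => /eqP.
rewrite /ip (bigD1 i) //=.
apply: (@lt_le_trans _ _ (v i 0 * v i 0)).
  by rewrite -expr2 lt0r sqr_ge0 andbT sqrf_eq0.
by rewrite lerDl; apply: sumr_ge0 => k _; rewrite -expr2 sqr_ge0.
Qed.

Lemma ip_CS a c : ip a a = ip c c -> ip a c <= ip c c /\ (a != c -> ip a c < ip c c).
Proof.
move=> E.
have H : ip (c - a) (c - a) = 2 * (ip c c - ip a c).
  rewrite ipDr ipNr !ipDl !ipNl E (ipC c a); lra.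
split.
  have := ip_ge0 (c - a); rewrite H; lra.
move=> ac; have := ip_gt0 (c - a); rewrite subr_eq0 eq_sym => /(_ ac).
rewrite H; lra.
Qed.

End IP.

Section Grp.
Context {R : realType} {d : nat} {G : set 'M[R]_d} (hG : finite_orth_group G).

Lemma G1 : G 1%:M.
Proof. by case: hG. Qed.

Lemma GM {g h} : G g -> G h -> G (g *m h).
Proof. by case: hG => _ _ H _ _; apply: H. Qed.

Lemma GtrE {g} : G g -> invmx g = g^T.
Proof.
case: hG => _ _ _ _ H5 Gg; have E := H5 g Gg.
have [gu _] := mulmx1_unit E.
by rewrite -[invmx g]mulmx1 -E mulmxA mulVmx // mul1mx.
Qed.

Lemma Gtr {g} : G g -> G g^T.
Proof. by move=> Gg; rewrite -GtrE //; case: hG => _ _ _ H _; apply: H. Qed.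

Lemma GtrM {g} : G g -> g^T *m g = 1%:M.
Proof.
move=> Gg; case: hG => _ _ _ _ H5; have := H5 _ (Gtr Gg).
by rewrite trmxK.
Qed.

Lemma orbit_refl a : gorbit G a a.
Proof. by exists 1%:M; [exact: G1 | rewrite mul1mx]. Qed.

Lemma orbit_sub {q a} : gorbit G a q -> gorbit G q `<=` gorbit G a.
Proof.
case=> g Gg <- _ [h Gh <-]; exists (h *m g); first exact: GM.
by rewrite mulmxA.
Qed.

Lemma orbit_eq {q a} : gorbit G a q -> gorbit G q = gorbit G a.
Proof.
move=> qa; apply/seteqP; split; first exact: orbit_sub.
case: qa => g Gg <- _ [h Gh <-]; exists (h *m g^T); first by apply: GM => //; exact: Gtr.
by rewrite -mulmxA (mulmxA g^T) GtrM // mul1mx.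
Qed.

Lemma orbit_norm {q a} : gorbit G a q -> ip q q = ip a a.
Proof. by case=> g Gg <-; rewrite ip_mul mulmxA GtrM // mul1mx. Qed.

Lemma orbit_CS {p q a} : gorbit G a p -> gorbit G a q ->
  ip p q <= ip q q /\ (p != q -> ip p q < ip q q).
Proof.
by move=> pa qa; apply: ip_CS; rewrite (orbit_norm pa) (orbit_norm qa).
Qed.

Lemma Gseq : exists s : seq 'M[R]_d, G = [set` s].
Proof. by case: hG => fin _ _ _ _; apply/finite_seqP. Qed.

End Grp.

Section Fin.
Context {R : realType} {T : eqType}.

Lemma seq_argmax0 (s : seq T) (f : T -> R) h :
  exists2 m, m \in h :: s & forall k, k \in h :: s -> f k <= f m.
Proof.
elim: s h => [|h' s IH] h.
  by exists h; rewrite ?inE ?eqxx // => k; rewrite inE => /eqP ->.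
have [m ms Hm] := IH h'.
have [le|lt] := leP (f h) (f m).
  exists m; first by rewrite inE ms orbT.
  by move=> k; rewrite inE => /orP [/eqP ->|/Hm].
exists h; first by rewrite inE eqxx.
move=> k; rewrite inE => /orP [/eqP ->//|/Hm km].
exact: (le_trans km (ltW lt)).
Qed.

Lemma seq_argmax (s : seq T) (f : T -> R) x0 : x0 \in s ->
  exists2 m, m \in s & forall h, h \in s -> f h <= f m.
Proof. by case: s => [//|h s] _; exact: seq_argmax0. Qed.

Lemma seq_small (s : seq T) (P : T -> Prop) (a b : T -> R) :
  (forall g, g \in s -> P g -> 0 < a g) ->
  exists2 e, 0 < e & forall e', 0 < e' -> e' <= e ->
     forall g, g \in s -> P g -> 0 < a g + e' * b g.
Proof.
elim: s => [|h s IH] H.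
  by exists 1 => // e' _ _ g.
have [e1 e10 He1] : exists2 e, 0 < e & forall e', 0 < e' -> e' <= e ->
     forall g, g \in s -> P g -> 0 < a g + e' * b g.
  by apply: IH => g gs; apply: H; rewrite inE gs orbT.
pose eh := if 0 < a h then a h / (`|b h| + 1) else 1.
have eh0 : 0 < eh.
  rewrite /eh; case: ifP => // ah; apply: divr_gt0; first by [].
  by have := normr_ge0 (b h); lra.
exists (Num.min e1 eh); first by rewrite lt_min e10 eh0.
move=> e' e'0; rewrite le_min => /andP [le1 leh] g; rewrite inE => /orP [/eqP ->|gs] Pg; last exact: He1.
have ah := H h (mem_head _ _) Pg.
move: leh; rewrite /eh ah.
have k0 : 0 < `|b h| + 1 by have := normr_ge0 (b h); lra.
rewrite ler_pdivlMr // => le.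
have nb : - `|b h| <= b h by apply: lerNnormlW.
nra.
Qed.

End Fin.

Definition Cset {R : realType} {d : nat} (G : set 'M[R]_d) (a : 'cV[R]_d) :=
  [set v | forall p, gorbit G a p -> ip p v <= ip a v].

Section Top.
Context {R : realType} {d : nat}.

Lemma sum_cont (I : Type) (s : seq I) (F : I -> 'cV[R]_d -> R) :
  (forall i, continuous (F i)) -> continuous (fun v => \sum_(i <- s) F i v).
Proof.
move=> HF; elim: s => [|i s IH].
  have -> : (fun v => \sum_(i <- [::]) F i v) = (fun=> 0) by apply: funext => v; rewrite big_nil.
  exact: cst_continuous.
have -> : (fun v => \sum_(j <- i :: s) F j v) = F i + (fun v => \sum_(j <- s) F j v).
  by apply: funext => v; rewrite big_cons.
by move=> v; apply: continuousD; [exact: HF | exact: IH].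
Qed.

Lemma ip_cont (p : 'cV[R]_d) : continuous (fun v : 'cV[R]_d => ip p v).
Proof.
rewrite /ip; apply: sum_cont => i v.
have -> : (fun v : 'cV[R]_d => p i 0 * v i 0) = (fun=> p i 0) \* (fun v : 'cV[R]_d => v i 0) by [].
apply: continuousM; first exact: cst_continuous.
exact: coord_continuous.
Qed.

Lemma closed_half (p a : 'cV[R]_d) : closed [set v : 'cV[R]_d | ip p v <= ip a v].
Proof.
have -> : [set v : 'cV[R]_d | ip p v <= ip a v] =
   (fun v => ip a v - ip p v) @^-1` [set r : R | 0 <= r].
  by apply/seteqP; split => v /=; rewrite subr_ge0.
apply: preimage_closed; last exact: closed_ge.
have -> : (fun v => ip a v - ip p v) = (fun v : 'cV[R]_d => ip a v) - (fun v => ip p v) by [].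
by move=> v _; exact: (continuousB (ip_cont a v) (ip_cont p v)).
Qed.

End Top.

Section Main.
Context {R : realType} {d : nat} {G : set 'M[R]_d} (hG : finite_orth_group G).

Lemma orbit_argmax z (f : 'cV[R]_d -> R) :
  exists2 m, gorbit G z m & forall p, gorbit G z p -> f p <= f m.
Proof.
have [s Gs] := Gseq hG.
have s1 : 1%:M \in s by have := G1 hG; rewrite Gs.
have [g gs Hg] := seq_argmax s (fun g => f (g *m z)) _ s1.
exists (g *m z); first by exists g => //; rewrite Gs.
by move=> p [h + <-]; rewrite Gs => hs; apply: Hg.
Qed.

Lemma orbit_small z (P : 'cV[R]_d -> Prop) (A B : 'cV[R]_d -> R) :
  (forall p, gorbit G z p -> P p -> 0 < A p) ->
  exists2 e, 0 < e & forall p, gorbit G z p -> P p -> 0 < A p + e * B p.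
Proof.
move=> H; have [s Gs] := Gseq hG.
have [e e0 He] := seq_small s (fun g => P (g *m z)) (fun g => A (g *m z)) (fun g => B (g *m z))
  (fun g gs Pg => H _ (ex_intro2 _ _ g (eq_ind_r (fun S => S g) gs Gs) erefl) Pg).
exists e => // p [g + <-]; rewrite Gs => gs Pg.
exact: He.
Qed.

Lemma key {a c t} : Cset G a c -> 0 < t -> vor G a (c + t *: a).
Proof.
move=> Cc t0 p pa pna; rewrite !ipDr !ipZr.
have h1 := Cc p pa.
have [_ /(_ pna) h2] := orbit_CS hG pa (orbit_refl hG a).
nra.
Qed.

Lemma closure_C a : closure (vor G a) = Cset G a.
Proof.
apply/seteqP; split.
  move=> v cv p pa.
  have E := (closure_id _).1 (closed_half p a).
  suff : closure (vor G a) `<=` [set v | ip p v <= ip a v] by apply.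
  rewrite E; apply: closureS => w wv /=.
  have [->|pna] := eqVneq p a; first exact: lexx.
  exact: ltW (wv p pa pna).
move=> c Cc B /nbhs_ballP [e /= e0 eB].
have n0 : 0 <= `|a| by [].
pose t := e / (`|a| + 1).
have t0 : 0 < t by apply: divr_gt0 => //; lra.
exists (c + t *: a); split; first exact: key.
apply: eB; rewrite -ball_normE /= opprD addrA subrr add0r normrN normrZ.
rewrite gtr0_norm // /t mulrAC ltr_pdivrMr; last lra.
nra.
Qed.


Lemma step1 (x y w : 'cV[R]_d) : exists2 e, 0 < e & forall t, gorbit G y t ->
  (forall q, gorbit G y q -> ip q (w + e *: x) <= ip t (w + e *: x)) -> Cset G t w.
Proof.
have [q0 q0y Hq0] := orbit_argmax y (fun q => ip q w).
have [e e0 He] := orbit_small y (fun q => ip q w < ip q0 w)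
  (fun q => ip q0 w - ip q w) (fun q => ip q0 x - ip q x)
  (fun q _ h => ltac:(by rewrite subr_gt0)).
exists e => // t ty Ht p; rewrite (orbit_eq hG ty) => py.
have Hq0t := Ht q0 q0y; rewrite !ipDr !ipZr in Hq0t.
have le : ip q0 w <= ip t w.
  case: leP => // lt; have := He t ty lt; rewrite mulrBr; lra.
exact: le_trans (Hq0 p py) le.
Qed.

End Main.


Theorem lemma24 (R : realType) (d : nat) (G : set 'M[R]_d)
  (x y : 'cV[R]_d) (T : set 'cV[R]_d) :
  finite_orth_group G -> T `<=` gorbit G y ->
  let a := Sxy G x y `<=` T in
  let b := closure (vor G x) `<=` \bigcup_(p in T) closure (vor G p) in
  let c := forall z : 'cV[R]_d, exists2 v, argmax_orbit G z x v &
             T `&` argmax_orbit G y v !=set0 in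
  [/\ a <-> b, b -> c & (Pfree G x -> c -> b)].
Proof.
move=> hG Ty a b c.
have bc : b -> c.
  move=> Hb z; have [v vz Hv] := orbit_argmax hG z (fun p => ip p x).
  exists v; first by split.
  have Cv : Cset G x v.
    move=> p [h Gh <-]; rewrite ip_mul ipC [ip x v]ipC; apply: Hv.
    rewrite -(orbit_eq hG vz); exists h^T => //. by have hh := Gtr hG Gh; exact: hh.
  have [p Tp] := Hb v (ltac:(by rewrite (closure_C hG))).

  rewrite (closure_C hG) => Cpv.
  exists p; split => //; split; first exact: Ty.
  by move=> p' p'y; apply: Cpv; rewrite (orbit_eq hG (Ty p Tp)).
split => //.
- split.
  + move=> Ha w; rewrite (closure_C hG) => Cw.
    have [e e0 He] := step1 hG x y w.
    set u := w + e *: x.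
    have ux : vor G x u := key hG Cw e0.
    have [qs qsy Hqs] := orbit_argmax hG y (fun q => ip q u).
    have Cqsw := He qs qsy Hqs.
    have [dl dl0 Hdl] := orbit_small hG x (fun p => p != x)
      (fun p => ip x u - ip p u) (fun p => ip x qs - ip p qs)
      (fun p px pnx => ltac:(by rewrite subr_gt0; exact: ux p px pnx)).
    set v := u + dl *: qs.
    have vx : vor G x v.
      move=> p px pnx; have := Hdl p px pnx; rewrite /v !ipDr !ipZr mulrBr; lra.
    have vq : vor G qs v.
      apply: key => //; move=> p; rewrite (orbit_eq hG qsy) => py; exact: Hqs p py.
    have Tqs : T qs by apply: Ha; split => //; exists v.
    by exists qs => //; rewrite (closure_C hG).
  + move=> Hb q [qy [w [wq wx]]].
    have [p Tp] := Hb w (subset_closure wx); rewrite (closure_C hG) => Cpw.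
    have py := Ty p Tp.
    have qp : gorbit G p q by rewrite (orbit_eq hG py).
    have le := Cpw q qp.
    have [<-//|pnq] := eqVneq p q.
    have := wq p (ltac:(by rewrite (orbit_eq hG qy))) pnq.
    by rewrite ltNge le.
- move=> Fx Hc w; rewrite (closure_C hG) => Cw.
  have [e e0 He] := step1 hG x y w.
  set u := w + e *: x.
  have ux : vor G x u := key hG Cw e0.
  have [v [[g Gg gv] Hv] [t [Tt [ty Ht]]]] := Hc u.
  have gx : g^T *m x = x.
    apply/eqP; apply: contraT => ne.
    have h1 := ux _ (ex_intro2 _ _ g^T (Gtr hG Gg) erefl) ne.
    have := Hv u (orbit_refl hG u).
    by rewrite -gv ip_mul (ipC u x) (ipC u (g^T *m x)) leNgt h1.
  have g1 : g = 1%:M.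
    by have := Fx _ (Gtr hG Gg) gx; rewrite -{2}(trmxK g) => ->; rewrite trmx1.
  move: gv Ht; rewrite g1 mul1mx => <- Ht.
  by exists t => //; rewrite (closure_C hG); apply: He.
Qed.
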